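(* Let $k,h,d\in\mathbb{P}$ and let $b_1,\dots,b_k\in\mathbb{P}$. Let $A=(a,ha+db_1,\dots,ha+db_k)$ with $\gcd(A)=1$ and $\gcd(a,d)=1$, and put $B=(b_1,\dots,b_k)$. Then for every $0\le r\le a-1$, $$N_{dr}=\min\{\,O_B(ma+r)\cdot ha+(ma+r)d \;:\; m\in\mathbb{N}\,\}.$$
   Context: $\mathbb{N}=\{0,1,2,\dots\}$, $\mathbb{P}=\{1,2,\dots\}$. For $A=(a,c_1,\dots,c_k)$ of positive integers with $\gcd(A)=1$ and an integer $r$, $N_r$ denotes the least nonnegative integer $a_0$ with $a_0\equiv r \pmod a$ that can be written as $a_0=\sum_{i=1}^k c_ix_i$ with all $x_i\in\mathbb{N}$ (so $N_r$ depends only on $r \bmod a$). For $B=(b_1,\dots,b_k)$ and an integer $M$, $O_B(M)=\min\{\sum_{i=1}^k x_i : \sum_{i=1}^k b_ix_i=M,\ x_i\in\mathbb{N}\}$ (taken to be $+\infty$ if there is no such representation). *)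

(* Defs.v *)
From mathcomp Require Import all_boot.
Set Implicit Arguments. Unset Strict Implicit. Unset Printing Implicit Defensive.

Definition is_least (S : nat -> Prop) (n : nat) : Prop :=
  S n /\ forall m, S m -> n <= m.

(* the set of a0 in N with a0 = r (mod a) representable as sum_i c_i x_i, x_i in N;
   N_r (for A = (a, c_1, ..., c_k)) is its least element *)
Definition N_set (k a : nat) (c : 'I_k -> nat) (r : nat) (a0 : nat) : Prop :=
  a0 = r %[mod a] /\ exists x : 'I_k -> nat, \sum_(i < k) c i * x i = a0.

(* is_O b M o  <->  O_B(M) = o (finite); O_B(M) = +oo iff no o satisfies it *)
Definition is_O (k : nat) (b : 'I_k -> nat) (M o : nat) : Prop :=
  is_least (fun s => exists x : 'I_k -> nat,
              \sum_(i < k) b i * x i = M /\ \sum_(i < k) x i = s) o.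

Definition gcd_tuple (k a : nat) (c : 'I_k -> nat) : nat :=
  gcdn a (\big[gcdn/0]_(i < k) c i).

(* Main.v *)
Require Import Defs.
From mathcomp Require Import all_boot.
From mathcomp Require Import zify.
From Stdlib Require Import Classical.

Lemma least_exists (S : nat -> Prop) : (exists n, S n) -> exists n, is_least S n.
Proof.
move=> [n Sn]; apply: NNPP => H.
have K : forall p m, m <= p -> ~ S m.
  elim=> [|p IH] m Hm Sm.
    apply: H; exists m; split=> // q _; move: Hm; rewrite leqn0 => /eqP ->; done.
  have [Hl|Hg] := leqP m p; first exact: IH Hl Sm.
  apply: H; exists m; split=> // q Sq; rewrite leqNgt; apply/negP => Hq.
  apply: (IH q) => //; lia.
exact: (K n n (leqnn n) Sn).
Qed.

Lemma modcancel a d T r : 0 < d -> gcdn a d = 1 ->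
  d * T = d * r %[mod a] -> T = r %[mod a].
Proof.
move=> d0 g H.
case: (egcdnP a d0) => km kn e _.
have E : forall X, X = km * (d * X) %[mod a].
  move=> X; rewrite mulnA e gcdnC g mulnDl mul1n mulnAC modnMDl //.
by rewrite (E T) (E r) -modnMmr H modnMmr.
Qed.

Lemma decomp k h d a (b : 'I_k -> nat) (x : 'I_k -> nat) :
  \sum_(i < k) (h * a + d * b i) * x i =
  h * a * (\sum_(i < k) x i) + d * (\sum_(i < k) b i * x i).
Proof.
rewrite !big_distrr -big_split /=; apply: eq_bigr => i _.
by rewrite mulnDl mulnA.
Qed.

Lemma reach k a (c : 'I_k -> nat) : 0 < a -> gcd_tuple a c = 1 ->
  exists x : 'I_k -> nat, \sum_(i < k) c i * x i = 1 %[mod a].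
Proof.
move=> a0 g.
pose P g := exists x : 'I_k -> nat, \sum_(i < k) c i * x i = g %[mod a].
have Pg : forall g1 g2, P g1 -> P g2 -> P (gcdn g1 g2).
  move=> g1 g2 [x1 H1] [x2 H2].
  have [->|g1p] := posnP g1.
    by rewrite gcd0n; exists x2.
  case: (egcdnP g2 g1p) => km kn e _.
  exists (fun i => km * x1 i + kn * (a - 1) * x2 i).
  have -> : \sum_(i < k) c i * (km * x1 i + kn * (a - 1) * x2 i) =
      km * \sum_(i < k) c i * x1 i + kn * (a - 1) * \sum_(i < k) c i * x2 i.
    rewrite !big_distrr -big_split /=; apply: eq_bigr => i _.
    rewrite mulnDr !mulnA; lia.
  rewrite -modnDm -(modnMmr km) H1 -(modnMmr (kn * (a - 1))) H2 !modnMmr modnDm.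
  have -> : km * g1 + kn * (a - 1) * g2 = gcdn g1 g2 + (kn * g2) * a.
    rewrite e; case: (a) a0 => // a' _; rewrite subn1 /=; nia.
  by rewrite addnC modnMDl.
have Pc : P (\big[gcdn/0]_(i < k) c i).
  apply: (big_ind P) => //.
    by exists (fun _ => 0); rewrite big1 // => i _; rewrite muln0.
  move=> i _; exists (fun j => (j == i) : nat).
  rewrite (bigD1 i) //= eqxx muln1 big1 ?addn0 // => j /negbTE ->.
  by rewrite muln0.
have Pa : P a by exists (fun _ => 0); rewrite big1 ?modnn ?mod0n // => i _; rewrite muln0.
by have := Pg _ _ Pa Pc; rewrite /gcd_tuple in g; rewrite g.
Qed.

Theorem mainTheorem1 (k h d a : nat) (b : 'I_k -> nat) :
  0 < k -> 0 < h -> 0 < d -> 0 < a -> (forall i, 0 < b i) ->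
  gcd_tuple a (fun i => h * a + d * b i) = 1 ->
  gcdn a d = 1 ->
  forall r, r <= a - 1 ->
  exists n,
    is_least (N_set a (fun i => h * a + d * b i) (d * r)) n /\
    is_least (fun v => exists m o, is_O b (m * a + r) o /\
                                   v = o * (h * a) + (m * a + r) * d) n.
Proof.
move=> k0 h0 d0 a0 b0 gt g r ra.
set S1 := N_set _ _ _.
set S2 := (fun v => exists m o, is_O b (m * a + r) o /\
                                   v = o * (h * a) + (m * a + r) * d).
have S21 : forall v, S2 v -> S1 v.
  move=> v; rewrite /S2 /is_O /is_least => -[m [o [[[x [Hx1 Hx2]] _] ->]]].
  split; last first.
    exists x; rewrite decomp Hx1 Hx2; lia.
  have -> : o * (h * a) + (m * a + r) * d = (o * h + m * d) * a + d * r by lia.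
  by rewrite modnMDl.
have S12 : forall v, S1 v -> exists w, S2 w /\ w <= v.
  move=> v [Hm [x Hx]].
  rewrite decomp in Hx.
  set T := \sum_(i < k) b i * x i in Hx.
  have HT : T = r %[mod a].
    apply: (@modcancel a d T r d0 g).
    by rewrite -Hm -Hx mulnAC modnMDl.
  have Tdec : T = T %/ a * a + r.
    by rewrite {1}(divn_eq T a) HT modn_small //; lia.
  have [o Ho] := least_exists (fun s => exists x : 'I_k -> nat,
              \sum_(i < k) b i * x i = T /\ \sum_(i < k) x i = s)
              (ex_intro _ _ (ex_intro _ x (conj erefl erefl))).
  exists (o * (h * a) + T * d); split.
    exists (T %/ a), o; split; last by rewrite -Tdec.
    by rewrite /is_O -Tdec.
  rewrite -Hx.
  have := (proj2 Ho) (\sum_(i < k) x i) (ex_intro _ x (conj erefl erefl)).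
  by move=> H; rewrite (mulnC T d) leq_add2r mulnC leq_mul2l H orbT.
have [x1 Hx1] := @reach k a _ a0 gt.
have [n [Sn Hn]] : exists n, is_least S1 n.
  apply: least_exists; exists (\sum_(i < k) (h * a + d * b i) * (d * r * x1 i)).
  split; last by exists (fun i => d * r * x1 i).
  have -> : \sum_(i < k) (h * a + d * b i) * (d * r * x1 i) =
            d * r * \sum_(i < k) (h * a + d * b i) * x1 i.
    rewrite big_distrr /=; apply: eq_bigr => i _; lia.
  by rewrite -modnMmr Hx1 modnMmr muln1.
exists n; split; first by split.
have [w [Sw Hw]] := S12 n Sn.
have Hnw := Hn w (S21 w Sw).
have -> : n = w by lia.
split=> // v Sv.
have := Hn v (S21 v Sv); lia.
Qed.
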